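(* Let $(G,N,\theta)_{\mathcal H}$ be an $\mathcal H$-triple and let $\mathcal P$ be a projective representation of $G_\theta$ associated with $\theta$, with entries in $\mathbb Q^{\mathrm{ab}}$ and factor set $\alpha$. (a) Let $g\in G_\theta$. Then $\mathcal P^g(y)=\mu_g(y)M\mathcal P(y)M^{-1}$ for all $y\in G_\theta$, where $\mu_g(y)=\dfrac{\alpha(g,g^{-1})}{\alpha(g,yg^{-1})\alpha(y,g^{-1})}$ and $M=\mathcal P(g)$. In particular, $\mu_g$ takes values in $\mathbb Q^{\mathrm{ab}}\setminus\{0\}$. (b) Let $(g,\sigma)\in(G\times\mathcal H)_\theta$ and write $g=tx$ with $t\in G_\theta$ and $x\in G$. Then $\theta^{x\sigma}=\theta$, $(G_\theta)^x=G_\theta$, and $\mu_{g\sigma}=\mu_t^{x\sigma}\mu_{x\sigma}$, where $\mu_t^{x\sigma}(y)=\sigma(\mu_t(xyx^{-1}))$ for $y\in G_\theta$.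
   Context: All groups are finite; $p$ is a fixed prime. $\mathbb Q^{\mathrm{ab}}\subseteq\mathbb C$ is generated by all roots of unity, $\mathcal G=\mathrm{Gal}(\mathbb Q^{\mathrm{ab}}/\mathbb Q)$, $\mathcal H\le\mathcal G$ consists of those $\sigma$ for which there is an integer $f$ with $\sigma(\xi)=\xi^{p^f}$ for all roots of unity $\xi$ of order prime to $p$. For $N\trianglelefteq G$, $\theta\in\mathrm{Irr}(N)$, $g\in G$, $\sigma\in\mathcal G$: $\theta^{g\sigma}(n)=\sigma(\theta(gng^{-1}))$; $(G\times\mathcal H)_\theta$ is the stabilizer of $\theta$; $\theta^{\mathcal H}$ the $\mathcal H$-orbit; $G_{\theta^{\mathcal H}}=\{g:\theta^g\in\theta^{\mathcal H}\}$. $(G,N,\theta)_{\mathcal H}$ is an $\mathcal H$-triple if $N\trianglelefteq G$, $\theta\in\mathrm{Irr}(N)$, $G_{\theta^{\mathcal H}}=G$. A projective representation $\mathcal P$ with factor set $\alpha$ satisfies $\mathcal P(x)\mathcal P(y)=\alpha(x,y)\mathcal P(xy)$; $\mathcal P$ on $G_\theta$ is associated with $\theta$ if $\mathcal P_N$ affords $\theta$ and $\mathcal P(ng)=\mathcal P(n)\mathcal P(g)$, $\mathcal P(gn)=\mathcal P(g)\mathcal P(n)$. For $(x,\sigma)\in G\times\mathcal G$ with $\theta^{x\sigma}=\theta$, $\mathcal P^{x\sigma}(y)=\sigma(\mathcal P(xyx^{-1}))$ (entrywise; $\mathcal P^x$ when $\sigma=1$), and $\mu_{x\sigma}:G_\theta\to\mathbb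 C^\times$ is the unique function, constant on $N$-cosets with $\mu_{x\sigma}(1)=1$, such that $\mathcal P^{x\sigma}(y)=\mu_{x\sigma}(y)L^{-1}\mathcal P(y)L$ for all $y$, for some invertible matrix $L$. *)

(* Defs.v *)
From HB Require Import structures.
From mathcomp Require Import all_boot all_order all_algebra all_fingroup all_solvable all_field all_character.
Set Implicit Arguments. Unset Strict Implicit. Unset Printing Implicit Defensive.
Import Order.TTheory GRing.Theory Num.Theory.
Local Open Scope ring_scope.

(* Q^ab inside algC: the field generated by all roots of unity, i.e. the
   union of the cyclotomic fields Q(zeta_m). *)
Definition Qab (z : algC) : Prop :=
  exists (m : nat) (zeta : algC) (q : {poly rat}),
    (0 < m)%N /\ m.-primitive_root zeta /\ z = (map_poly ratr q).[zeta].

(* sigma in calH: there is an integer f with sigma(xi) = xi^(p^f) for every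
   root of unity xi of order prime to p.  For f < 0, xi^(p^f) is the unique
   p'-root of unity whose (p^|f|)-th power is xi.  Elements of Gal(Q^ab/Q)
   are represented by (restrictions of) field automorphisms of algC. *)
Definition in_calH (p : nat) (sigma : {rmorphism algC -> algC}) : Prop :=
  exists f : int, forall (m : nat) (xi : algC),
    (0 < m)%N -> coprime m p -> xi ^+ m = 1 ->
    if (0 <= f)%R then sigma xi = xi ^+ (p ^ `|f|)
    else (sigma xi) ^+ (p ^ `|f|) = xi.

(* theta^{g sigma} (n) = sigma (theta (g n g^-1)) *)
Definition cfConjAut (gT : finGroupType) (N : {group gT}) (theta : 'CF(N))
  (g : gT) (sigma : {rmorphism algC -> algC}) : 'CF(N) :=
  cfAut sigma (theta ^ g)%CF.

Definition H_triple (p : nat) (gT : finGroupType) (G N : {group gT})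
  (theta : 'CF(N)) : Prop :=
  (N <| G)%g /\ theta \in irr N /\
  (forall g, g \in G -> exists tau, in_calH p tau /\ (theta ^ g)%CF = cfAut tau theta).

Definition proj_rep_assoc (gT : finGroupType) (N : {group gT}) (T : {set gT})
  (theta : 'CF(N)) (n : nat) (P : gT -> 'M[algC]_n) (alpha : gT -> gT -> algC)
  : Prop :=
  [/\ (forall x, x \in T -> P x \in unitmx),
      (forall x y, x \in T -> y \in T ->
         alpha x y != 0 /\ P x *m P y = alpha x y *: P (x * y)%g),
      mx_repr N P,
      (forall m, m \in N -> theta m = \tr (P m)) &
      (forall m x, m \in N -> x \in T ->
         P (m * x)%g = P m *m P x /\ P (x * m)%g = P x *m P m)].

Definition Pconj (gT : finGroupType) (n : nat) (P : gT -> 'M[algC]_n)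
  (x : gT) (sigma : algC -> algC) : gT -> 'M[algC]_n :=
  fun y => map_mx sigma (P (x * y * x^-1)%g).

(* mu is the function mu_{x sigma} : G_theta -> C^x, i.e. it is constant on
   N-cosets, mu 1 = 1, and P^{x sigma}(y) = mu(y) L^-1 P(y) L for some
   invertible L. (Such a function is unique.) *)
Definition is_mu (gT : finGroupType) (N : {group gT}) (T : {set gT})
  (n : nat) (P : gT -> 'M[algC]_n) (x : gT) (sigma : algC -> algC)
  (mu : gT -> algC) : Prop :=
  [/\ (forall m y, m \in N -> y \in T -> mu (m * y)%g = mu y),
      mu 1%g = 1,
      (forall y, y \in T -> mu y != 0) &
      exists2 L : 'M[algC]_n, L \in unitmx &
        forall y, y \in T -> Pconj P x sigma y = mu y *: (invmx L *m P y *m L)].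

(* Main.v *)
Require Import Defs.
From HB Require Import structures.
From mathcomp Require Import all_boot all_order all_algebra all_fingroup all_solvable all_field all_character.
From mathcomp Require Import ring.
Import Order.TTheory GRing.Theory Num.Theory.
Set Implicit Arguments. Unset Strict Implicit. Unset Printing Implicit Defensive.
Local Open Scope ring_scope.

Lemma Qab_lift (m1 k : nat) (zeta1 zeta : algC) (q1 : {poly rat}) :
  (0 < m1)%N -> (0 < k)%N -> m1.-primitive_root zeta1 -> (m1 * k).-primitive_root zeta ->
  exists q : {poly rat}, (map_poly ratr q1).[zeta1] = (map_poly ratr q).[zeta].
Proof.
move=> m1p kp pz1 pz.
have pzk : m1.-primitive_root (zeta ^+ k).
  have := exp_prim_root pz k.
  have -> : gcdn k (m1 * k) = k by rewrite gcdnMl.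
  by rewrite mulnK.
have [i Hi] := prim_rootP pzk (prim_expr_order pz1).
exists (q1 \Po 'X^(k * i)).
by rewrite map_comp_poly map_polyXn horner_comp hornerXn Hi exprM.
Qed.

Lemma Qab_common a b : Qab a -> Qab b ->
  exists (m : nat) (zeta : algC) (qa qb : {poly rat}),
    [/\ (0 < m)%N, m.-primitive_root zeta, a = (map_poly ratr qa).[zeta] &
        b = (map_poly ratr qb).[zeta]].
Proof.
move=> [m1 [z1 [q1 [m1p [pz1 ->]]]]] [m2 [z2 [q2 [m2p [pz2 ->]]]]].
have mp : (0 < m1 * m2)%N by rewrite muln_gt0 m1p.
have [z pz] := C_prim_root_exists mp.
have [qa Ha] := Qab_lift q1 m1p m2p pz1 pz.
have pz' : (m2 * m1).-primitive_root z by rewrite mulnC.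
have [qb Hb] := Qab_lift q2 m2p m1p pz2 pz'.
by exists (m1 * m2)%N, z, qa, qb.
Qed.

Lemma Qab_of_poly m zeta q : (0 < m)%N -> m.-primitive_root zeta ->
  Qab ((map_poly ratr q).[zeta]).
Proof. by move=> mp pz; exists m, zeta, q. Qed.

Lemma Qab_rat (r : rat) : Qab (ratr r).
Proof.
have [z pz] := C_prim_root_exists (isT : (0 < 1)%N).
exists 1%N, z, r%:P; split => //.
by rewrite map_polyC hornerC.
Qed.

Lemma Qab0 : Qab 0. Proof. by have := Qab_rat 0; rewrite rmorph0. Qed.
Lemma Qab1 : Qab 1. Proof. by have := Qab_rat 1; rewrite rmorph1. Qed.

Lemma QabD a b : Qab a -> Qab b -> Qab (a + b).
Proof.
move=> Ha Hb; have [m [z [qa [qb [mp pz -> ->]]]]] := Qab_common Ha Hb.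
by rewrite -hornerD -rmorphD; apply: Qab_of_poly mp pz.
Qed.

Lemma QabM a b : Qab a -> Qab b -> Qab (a * b).
Proof.
move=> Ha Hb; have [m [z [qa [qb [mp pz -> ->]]]]] := Qab_common Ha Hb.
by rewrite -hornerM -rmorphM; apply: Qab_of_poly mp pz.
Qed.

Lemma QabV a : Qab a -> Qab a^-1.
Proof.
move=> [m [z [q [mp [pz ->]]]]].
pose r : {poly rat} := 'X^m - 1.
have nz_r : r != 0.
  apply/eqP => /(congr1 (fun p : {poly rat} => p.[0])).
  rewrite /r !hornerE expr0n eqn0Ngt mp /= sub0r => /eqP.
  by rewrite oppr_eq0 oner_eq0.
have rz0 : root (map_poly (ratr : rat -> algC) r) z.
  by rewrite /r rmorphB /= map_polyXn rmorph1 rootE !hornerE (prim_expr_order pz) subrr.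
pose x := subfx_eval (ratr : {rmorphism rat -> algC}) z r q.
have Hx : subfx_inj x = (map_poly ratr q).[z] by rewrite subfx_inj_eval.
have [q' Hq'] := subfxE (x^-1).
have := subfx_inj_eval rz0 nz_r q'.
rewrite -Hq' fmorphV /= Hx => E.
by exists m, z, q'; split => //; exact: E.
Qed.

Lemma mx_nz_entry n (A : 'M[algC]_n) : (0 < n)%N -> A \in unitmx ->
  exists i j, A i j != 0.
Proof.
move=> np uA.
case: (boolP [exists i, exists j, A i j != 0]) => [/existsP[i /existsP[j nz]]|H].
  by exists i, j.
have A0 : A = 0.
  apply/matrixP => i j; rewrite mxE.
  apply/eqP/negPn/negP => nz; case/negP: H; apply/existsP; exists i.
  by apply/existsP; exists j.
move: uA; rewrite A0 unitmxE; case: n np A H A0 => // n' _ _ _ _.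
by rewrite det0 unitr0.
Qed.

Lemma scal_inj n (X : 'M[algC]_n) (a b : algC) : (0 < n)%N -> X \in unitmx ->
  a *: X = b *: X -> a = b.
Proof.
move=> np uX E; have [i [j nz]] := mx_nz_entry np uX.
have := congr1 (fun M : 'M_n => M i j) E; rewrite /= !mxE.
by move/mulIf; apply.
Qed.

Lemma mu_uniq (gT : finGroupType) (N : {group gT}) (T : {set gT}) n
  (P : gT -> 'M[algC]_n) (rN : mx_repr N P) :
  (0 < n)%N -> mx_irreducible (MxRepresentation rN) ->
  forall A B : 'M_n, A \in unitmx -> B \in unitmx ->
  forall a b : gT -> algC,
  (forall m, m \in N -> a m = 1) -> (forall m, m \in N -> b m = 1) ->
  N \subset T ->
  (forall y, y \in T -> a y *: (invmx A *m P y *m A) = b y *: (invmx B *m P y *m B)) ->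
  (forall y, y \in T -> P y \in unitmx) ->
  forall y, y \in T -> a y = b y.
Proof.
move=> np irrN A B uA uB a b a1 b1 sNT E uP y Ty.
pose C := A *m invmx B.
have key z : z \in T -> a z *: (P z *m C) = b z *: (C *m P z).
  move=> Tz; have := congr1 (fun M => A *m M *m invmx B) (E z Tz).
  rewrite /= -scalemxAr -scalemxAl -scalemxAr -scalemxAl.
  rewrite !mulmxA mulmxV // mul1mx -!mulmxA mulmxV // mulmx1.
  by rewrite /C !mulmxA.
have cC : centgmx (MxRepresentation rN) C.
  apply/centgmxP => m Nm /=.
  have := key m (subsetP sNT m Nm); rewrite a1 // b1 // !scale1r.
  by move=> ->.
have absN := group_closure_closed_field irrN.
have /is_scalar_mxP [c Cc] := mx_abs_irr_cent_scalar absN cC.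
have uC : C \in unitmx by rewrite unitmx_mul uA unitmx_inv.
have c0 : c != 0.
  apply/eqP => c0; move: uC; rewrite Cc c0 => u0.
  have [i [j]] := mx_nz_entry np u0.
  by rewrite mxE mul0rn eqxx.
have := key y Ty; rewrite Cc mul_mx_scalar mul_scalar_mx !scalerA => /scal_inj.
by move=> /(_ np (uP y Ty)) /mulIf; apply.
Qed.

Lemma invmxM' n (A B : 'M[algC]_n) : A \in unitmx -> B \in unitmx ->
  invmx (A *m B) = invmx B *m invmx A.
Proof.
move=> uA uB.
have E : A *m B *m (invmx B *m invmx A) = 1%:M by rewrite mulmxA mulmxK // mulmxV.
by rewrite -[LHS]mulmx1 -E mulmxA mulVmx ?unitmx_mul ?uA ?uB // mul1mx.
Qed.

Lemma Qab_sum (I : finType) (F : I -> algC) : (forall i, Qab (F i)) -> Qab (\sum_i F i).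
Proof. by move=> H; apply: (big_ind Qab Qab0 QabD) => i _; apply: H. Qed.

Lemma inertia_aut (gT : finGroupType) (N : {group gT}) (phi : 'CF(N))
  (u : {rmorphism algC -> algC}) : inertia (cfAut u phi) = inertia phi.
Proof.
by apply/setP => y; rewrite !inE -cfAutConjg (inj_eq (cfAut_inj u)).
Qed.

Lemma memNJ (gT : finGroupType) (N : {group gT}) m h :
  m \in N -> h \in ('N(N))%g -> (h * m * h^-1)%g \in N.
Proof.
move=> Nm nh; have : (m ^ h^-1)%g \in N by rewrite memJ_norm // groupV.
by rewrite /conjg invgK mulgA.
Qed.

Theorem lemma1p7 (p : nat) (gT : finGroupType) (G N : {group gT})
  (theta : 'CF(N)) (n : nat) (P : gT -> 'M[algC]_n) (alpha : gT -> gT -> algC) :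
  prime p ->
  H_triple p G theta ->
  proj_rep_assoc ('I_G[theta])%g theta P alpha ->
  (forall y, y \in ('I_G[theta])%g -> forall i j, Qab (P y i j)) ->
  (* (a) *)
  (forall g, g \in ('I_G[theta])%g ->
    let mu_g := fun y => alpha g g^-1%g / (alpha g (y * g^-1)%g * alpha y g^-1%g) in
    let M := P g in
    [/\ (forall y, y \in ('I_G[theta])%g ->
           Pconj P g id y = mu_g y *: (M *m P y *m invmx M)),
        is_mu N ('I_G[theta])%g P g id mu_g,
        (forall mu, is_mu N ('I_G[theta])%g P g id mu ->
           forall y, y \in ('I_G[theta])%g -> mu y = mu_g y) &
        (forall y, y \in ('I_G[theta])%g -> Qab (mu_g y) /\ mu_g y != 0)])
  /\
  (* (b) *)
  (forall (g : gT) (sigma : {rmorphism algC -> algC}) (t x : gT),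
    g \in G -> in_calH p sigma -> cfConjAut theta g sigma = theta ->
    t \in ('I_G[theta])%g -> x \in G -> g = (t * x)%g ->
    [/\ cfConjAut theta x sigma = theta,
        (('I_G[theta])%g :^ x)%g = ('I_G[theta])%g &
        forall mu_gs mu_t mu_xs,
          is_mu N ('I_G[theta])%g P g sigma mu_gs ->
          is_mu N ('I_G[theta])%g P t id mu_t ->
          is_mu N ('I_G[theta])%g P x sigma mu_xs ->
          forall y, y \in ('I_G[theta])%g ->
            mu_gs y = sigma (mu_t (x * y * x^-1)%g) * mu_xs y]).
Proof.
move=> _ [nNG [irrth _]] [Punit Palpha Prepr Ptr Passoc] PQab.
have sNT : N \subset ('I_G[theta])%g by apply: sub_Inertia; case/andP: nNG.
have TN : ('I_G[theta])%g \subset ('N(N))%g := norm_Inertia G theta.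
pose rN := MxRepresentation Prepr.
have P1 : P 1%g = 1%:M := repr_mx1 rN.
have np : (0 < n)%N.
  rewrite lt0n; apply/eqP => n0.
  have := Ptr 1%g (group1 N); rewrite P1 mxtrace1 n0 => th1.
  case/irrP: irrth => i thi; move: th1; rewrite thi => /eqP.
  by rewrite (negbTE (irr1_neq0 i)).
have irrN : mx_irreducible rN.
  case/irr_reprP: irrth => [[n' rG'] irrG' thE].
  apply: (mx_rsim_irr _ irrG').
  apply/cfRepr_rsimP; rewrite -thE; apply/eqP/cfun_inP => x Nx.
  by rewrite cfunE Nx mulr1n; apply: Ptr.
have hal x y : x \in ('I_G[theta])%g -> y \in ('I_G[theta])%g -> alpha x y != 0.
  by move=> Tx Ty; case: (Palpha x y Tx Ty).
have hPM x y : x \in ('I_G[theta])%g -> y \in ('I_G[theta])%g ->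
    P x *m P y = alpha x y *: P (x * y)%g.
  by move=> Tx Ty; case: (Palpha x y Tx Ty).
have Qal x y : x \in ('I_G[theta])%g -> y \in ('I_G[theta])%g -> Qab (alpha x y).
  move=> Tx Ty; have Txy := groupM Tx Ty.
  have [i [j nz]] := mx_nz_entry np (Punit _ Txy).
  have := congr1 (fun M : 'M_n => M i j) (hPM x y Tx Ty); rewrite /= mxE => E.
  have -> : alpha x y = (P x *m P y) i j / P (x * y)%g i j.
  by rewrite mxE E mxE mulfK.
  apply: QabM; last by apply: QabV; apply: PQab.
  by rewrite mxE; apply: Qab_sum => k; apply: QabM; apply: PQab.
split.
- move=> g Tg mu_g M.
  have Tgi : (g^-1)%g \in ('I_G[theta])%g by rewrite groupV.
  have uM : M \in unitmx by apply: Punit.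
  have invM : invmx M = (alpha g g^-1%g)^-1 *: P g^-1%g.
    have E : M *m P g^-1%g = alpha g g^-1%g *: 1%:M by rewrite hPM // mulgV P1.
    by rewrite -[RHS](mulKmx uM) -scalemxAr E scalerA mulVf ?hal // scale1r mulmx1.
  have cl1 y : y \in ('I_G[theta])%g -> Pconj P g id y = mu_g y *: (M *m P y *m invmx M).
    move=> Ty; rewrite /Pconj map_mx_id //.
    rewrite invM -scalemxAr -mulmxA (hPM _ _ Ty Tgi) -scalemxAr.
    rewrite (hPM _ _ Tg (groupM Ty Tgi)) !scalerA mulgA.
    rewrite /mu_g.
    have h1 := hal _ _ Tg Tgi; have h2 := hal _ _ Tg (groupM Ty Tgi).
    have h3 := hal _ _ Ty Tgi.
    set a := alpha g g^-1%g; set b := alpha g (y * g^-1)%g; set c := alpha y g^-1%g.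
    have -> : a / (b * c) * (a^-1 * c) * b = 1.
      by field; rewrite h1 h2 h3.
    by rewrite scale1r.
  have QM u v : M *m u *m invmx M *m (M *m v *m invmx M) = M *m (u *m v) *m invmx M.
    by rewrite !mulmxA mulmxKV.
  have gN : g \in ('N(N))%g := subsetP TN g Tg.
  have PmJ m : m \in N -> P (g * m * g^-1)%g = M *m P m *m invmx M.
    move=> Nm; have Nm' := memNJ Nm gN.
    have E : P (g * m * g^-1)%g *m M = M *m P m.
      have [E1 _] := Passoc _ _ Nm' Tg.
      have [_ E2] := Passoc _ _ Nm Tg.
      by rewrite -E1 -E2 mulgKV.
    by rewrite -E mulmxK.
  have muN m y : m \in N -> y \in ('I_G[theta])%g -> mu_g (m * y)%g = mu_g y.
    move=> Nm Ty; have Tm := subsetP sNT m Nm; have Tmy := groupM Tm Ty.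
    apply: (@scal_inj n (M *m P (m * y)%g *m invmx M) _ _ np).
      by rewrite !unitmx_mul uM Punit // unitmx_inv uM.
    rewrite -(cl1 _ Tmy) /Pconj map_mx_id //.
    have -> : (g * (m * y) * g^-1 = (g * m * g^-1) * (g * y * g^-1))%g.
      by rewrite !mulgA mulgKV.
    have [E1 _] := Passoc _ _ (memNJ Nm gN) (groupM (groupM Tg Ty) Tgi).
    rewrite E1 PmJ //.
    have := cl1 y Ty; rewrite /Pconj map_mx_id // => ->.
    rewrite -scalemxAr QM.
    by have [E2 _] := Passoc _ _ Nm Ty; rewrite E2.
  have mu1 : mu_g 1%g = 1.
    have a1 : alpha 1%g g^-1%g = 1.
      have := hPM _ _ (group1 _) Tgi; rewrite P1 mul1mx mul1g => E.
      by symmetry; apply: (scal_inj np (Punit _ Tgi)); rewrite scale1r.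
    by rewrite /mu_g mul1g a1 mulr1 divff // hal.
  have munz y : y \in ('I_G[theta])%g -> mu_g y != 0.
    move=> Ty; have Tyg := groupM Ty Tgi.
    by rewrite /mu_g mulf_neq0 ?invr_neq0 ?mulf_neq0 ?hal.
  have ismu : is_mu N ('I_G[theta])%g P g id mu_g.
    split => //.
    by exists (invmx M); [rewrite unitmx_inv | move=> y Ty; rewrite invmxK cl1].
  split => //.
    move=> mu [mN m1 mnz [L uL HL]] y Ty.
    have uiM : invmx M \in unitmx by rewrite unitmx_inv.
    apply: (mu_uniq np irrN uL uiM _ _ sNT _ Punit Ty).
    - by move=> m Nm; have := mN m 1%g Nm (group1 _); rewrite mulg1 m1.
    - by move=> m Nm; rewrite -(mulg1 m) muN ?group1.
    by move=> z Tz; rewrite -HL // invmxK -cl1.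
  move=> y Ty; split; last exact: munz.
  have Tyg := groupM Ty Tgi.
  by rewrite /mu_g; apply: QabM; [apply: Qal | apply: QabV; apply: QabM; apply: Qal].
- move=> g sigma t x Gg _ Hg Tt Gx gtx.
  have xN : x \in ('N(N))%g := subsetP (normal_norm nNG) x Gx.
  have tN : t \in ('N(N))%g := subsetP TN t Tt.
  have b1 : cfConjAut theta x sigma = theta.
    have tI : t \in inertia theta by case/setIP: Tt.
    by move: Hg; rewrite /cfConjAut gtx cfConjgMnorm // (inertiaJ tI).
  have b2 : (('I_G[theta])%g :^ x)%g = ('I_G[theta])%g.
    rewrite conjIg conjGid // conjg_inertia //; congr (_ :&: _).
    by rewrite -{2}b1 /cfConjAut inertia_aut.
  split => //.
  move=> mu_gs mu_t mu_xs [gsN gs1 gsnz [L1 uL1 H1]] [tN' t1 tnz [L2 uL2 H2]].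
  move=> [xsN xs1 xsnz [L3 uL3 H3]] y Ty.
  have TJ z : z \in ('I_G[theta])%g -> (x * z * x^-1)%g \in ('I_G[theta])%g.
    move=> Tz; have : z \in (('I_G[theta])%g :^ x)%g by rewrite b2.
    by rewrite mem_conjg /conjg invgK mulgA.
  have uS : map_mx sigma L2 \in unitmx by rewrite map_unitmx.
  have uB : L3 *m map_mx sigma L2 \in unitmx by rewrite unitmx_mul uL3 uS.
  apply: (mu_uniq (b := fun y => sigma (mu_t (x * y * x^-1)%g) * mu_xs y)
            np irrN uL1 uB _ _ sNT _ Punit Ty) => [m Nm|m Nm|z Tz].
  - by have := gsN m 1%g Nm (group1 _); rewrite mulg1 gs1.
  - have Nm' := memNJ Nm xN.
    have -> : mu_t (x * m * x^-1)%g = 1.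
      by have := tN' _ 1%g Nm' (group1 _); rewrite mulg1 t1.
    by have := xsN m 1%g Nm (group1 _); rewrite mulg1 xs1 rmorph1 mul1r.
  - rewrite -H1 // invmxM' // /Pconj.
    have -> : (g * z * g^-1 = t * (x * z * x^-1) * t^-1)%g by rewrite gtx invMg !mulgA.
    have := H2 _ (TJ z Tz); rewrite /Pconj map_mx_id // => ->.
    rewrite map_mxZ !map_mxM map_invmx.
    have := H3 z Tz; rewrite /Pconj => ->.
    by rewrite -scalemxAr -scalemxAl scalerA !mulmxA.
Qed.
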